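(* Let $\mathcal{J}$ be a Jordan subalgebra of $H(F_{2n},j)$ isomorphic to $F_n^{(+)}$. Then there is an automorphism $\varphi$ of $H(F_{2n},j)$ such that $$\varphi(\mathcal{J})=\left\{\begin{pmatrix} X & 0\\ 0 & X^t\end{pmatrix} : X\in F_n\right\}.$$
   Context: $F$ is an algebraically closed field of characteristic different from $2$. $F_k$ denotes the algebra of $k\times k$ matrices over $F$; $F_k^{(+)}$ is the Jordan algebra on $F_k$ with product $X\odot Y=\frac{XY+YX}{2}$; $H(F_{2n},j)$ is the Jordan subalgebra of $F_{2n}^{(+)}$ consisting of all matrices $\begin{pmatrix} A & B\\ C & A^t\end{pmatrix}$ with $A\in F_n$ arbitrary and $B,C\in F_n$ skew-symmetric. Automorphisms are Jordan algebra automorphisms. *)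

(* Defs.v *)
From mathcomp Require Import all_boot all_order all_algebra.
Set Implicit Arguments. Unset Strict Implicit. Unset Printing Implicit Defensive.
Import GRing.Theory.
Local Open Scope ring_scope.

Section Jordan.
Variable F : fieldType.

Definition jprod (m : nat) (X Y : 'M[F]_m) : 'M[F]_m :=
  (2%:R)^-1 *: (X *m Y + Y *m X).

Definition inHj (n : nat) (M : 'M[F]_(n + n)) : Prop :=
  exists (A B C : 'M[F]_n),
    B^T = - B /\ C^T = - C /\ M = block_mx A B C A^T.

Definition jordan_subalgebra_Hj (n : nat) (J : 'M[F]_(n + n) -> Prop) : Prop :=
  (forall M, J M -> inHj M) /\
  J 0 /\
  (forall (a : F) M N, J M -> J N -> J (a *: M + N)) /\
  (forall M N, J M -> J N -> J (jprod M N)).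

Definition jiso_to_Fn_plus (n : nat) (J : 'M[F]_(n + n) -> Prop) : Prop :=
  exists psi : 'M[F]_n -> 'M[F]_(n + n),
    (forall (a : F) X Y, psi (a *: X + Y) = a *: psi X + psi Y) /\
    injective psi /\
    (forall M, J M <-> exists X, psi X = M) /\
    (forall X Y, psi (jprod X Y) = jprod (psi X) (psi Y)).

Definition jautomorphism_Hj (n : nat) (phi : 'M[F]_(n + n) -> 'M[F]_(n + n)) : Prop :=
  (forall M, inHj M -> inHj (phi M)) /\
  (forall (a : F) M N, inHj M -> inHj N -> phi (a *: M + N) = a *: phi M + phi N) /\
  (forall M N, inHj M -> inHj N -> phi M = phi N -> M = N) /\
  (forall N, inHj N -> exists M, inHj M /\ phi M = N) /\
  (forall M N, inHj M -> inHj N -> phi (jprod M N) = jprod (phi M) (phi N)).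

End Jordan.

(* Main.v *)
Require Import Defs.
From mathcomp Require Import all_boot all_order all_algebra.
Set Implicit Arguments. Unset Strict Implicit. Unset Printing Implicit Defensive.
Import GRing.Theory.
Local Open Scope ring_scope.

Section Generic.
Variable F : fieldType.
Hypothesis two_neq0 : (2%:R : F) != 0.
Variable N : nat.
Variable m : nat.

Lemma twice0 (p q : nat) (X : 'M[F]_(p,q)) : X *+ 2 = 0 -> X = 0.
Proof.
move=> h; have : (2%:R : F) *: X = 0 by rewrite scaler_nat.
by move/eqP; rewrite scaler_eq0 (negbTE two_neq0) /= => /eqP.
Qed.

Lemma L1 (e c : 'M[F]_N) : e *m e = e -> e *m c + c *m e = 0 ->
  e *m c = 0 /\ c *m e = 0.
Proof.
move=> ee h.
have h1 : e *m c + e *m c *m e = 0.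
  by have := congr1 (mulmx e) h; rewrite mulmxDr !mulmxA ee mulmx0.
have h2 : e *m c *m e + c *m e = 0.
  by have := congr1 (mulmx^~ e) h; rewrite mulmxDl -[c *m e *m e]mulmxA ee mul0mx.
move/eqP: h1; rewrite addr_eq0 => /eqP h1.
move/eqP: h2; rewrite addrC addr_eq0 => /eqP h2.
have ec : e *m c = c *m e by rewrite h1 h2.
have : e *m c = 0 by apply: twice0; rewrite mulr2n {2}ec.
by move=> z; split => //; rewrite -ec.
Qed.

Lemma mulmxMnl p q r (A : 'M[F]_(p,q)) (B : 'M[F]_(q,r)) k :
  (A *+ k) *m B = (A *m B) *+ k.
Proof. by elim: k => [|k IH]; rewrite ?mulr0n ?mul0mx // !mulrS mulmxDl IH. Qed.

Section Jrel.
Variable u : 'I_m.+1 -> 'I_m.+1 -> 'M[F]_N.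
Hypothesis Ju : forall i j k l, u i j *m u k l + u k l *m u i j
   = u i l *+ (j == k) + u k j *+ (l == i).

Lemma u_idem i : u i i *m u i i = u i i.
Proof.
have := Ju i i i i; rewrite !eqxx !mulr1n => h.
apply/eqP; rewrite -subr_eq0; apply/eqP/twice0.
by rewrite mulrnBl !mulr2n h subrr.
Qed.

Lemma u_sq0 i j : i != j -> u i j *m u i j = 0.
Proof.
move=> ij; have := Ju i j i j; rewrite [j == i]eq_sym (negbTE ij) !mulr0n addr0.
by move=> h; apply: twice0; rewrite mulr2n h.
Qed.

Lemma Ju0 i j k l : (j == k) = false -> (l == i) = false ->
  u i j *m u k l + u k l *m u i j = 0.
Proof. by move=> h1 h2; rewrite Ju h1 h2 !mulr0n addr0. Qed.

Definition hom (v : 'cV[F]_N) :=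
  u ord0 ord0 *m v = v /\ forall k, k != ord0 -> u ord0 k *m v = 0.

Lemma stepA v : hom v -> forall i j, j != ord0 -> u i j *m v = 0.
Proof.
move=> [pv hv] i j j0.
case: (eqVneq i ord0) => [->|i0]; first exact: hv.
have := @Ju0 ord0 ord0 i j; rewrite [ord0 == i]eq_sym (negbTE i0) (negbTE j0).
case/(_ erefl erefl)/(L1 (u_idem _)) => _ h.
by rewrite -pv mulmxA h mul0mx.
Qed.

Lemma Hlemma v : hom v -> forall i j k,
  u i j *m (u k ord0 *m v) = u i ord0 *m v *+ (j == k).
Proof.
move=> hv i j k; have [pv hv0] := hv.
case: (eqVneq j ord0) => [->|j0]; last first.
  have := Ju i j k ord0 => /(congr1 (mulmx^~ v)).
  rewrite mulmxDl !mulmxDl -!mulmxA !(stepA hv _ j0) mulmx0 addr0.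
  case: (eqVneq ord0 i) => _; last by rewrite mulr0n mul0mx addr0 -mulmxMnl.
  by rewrite mulr1n (stepA hv _ j0) addr0 -mulmxMnl.
case: (eqVneq k ord0) => [->|k0]; first by rewrite pv ?eqxx ?mulr1n.
rewrite mulr0n.
case: (eqVneq i ord0) => [->|i0].
  have := Ju ord0 ord0 k ord0; rewrite [ord0 == k]eq_sym (negbTE k0) eqxx.
  rewrite mulr0n mulr1n add0r => /(congr1 (mulmx^~ v)).
  by rewrite mulmxDl -!mulmxA pv => /(canRL (addrK _)); rewrite subrr.
case: (eqVneq i k) => [->|ik]; first by rewrite mulmxA u_sq0 ?mul0mx // eq_sym.
have := @Ju0 i i k ord0; rewrite (negbTE ik) [ord0 == i]eq_sym (negbTE i0).
case/(_ erefl erefl)/(L1 (u_idem _)) => h1 h2.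
have e1 : u i ord0 = u i i *m u i ord0 + u i ord0 *m u i i.
  by rewrite Ju !eqxx [ord0 == i]eq_sym (negbTE i0) mulr1n mulr0n addr0.
have := @Ju0 i ord0 k ord0; rewrite [ord0 == k]eq_sym (negbTE k0) [ord0 == i]eq_sym (negbTE i0).
move/(_ erefl erefl)/eqP; rewrite addr_eq0 => /eqP e2.
rewrite {1}e1 mulmxDl -!mulmxA (mulmxA (u i i) (u k ord0)) h1 mul0mx mulmx0 addr0.
by rewrite (mulmxA (u i ord0)) e2 mulNmx mulmxN !mulmxA h1 !mul0mx oppr0.
Qed.


Definition Tm (i1 : 'I_m.+1) :=
  u ord0 ord0 *m u ord0 i1 *m u i1 ord0 *m u ord0 ord0.
Definition Tm' (i1 : 'I_m.+1) :=
  u ord0 ord0 *m u i1 ord0 *m u ord0 i1 *m u ord0 ord0.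

Lemma T_hom i1 : i1 != ord0 ->
  u ord0 ord0 *m Tm i1 = Tm i1 /\ forall k, k != ord0 -> u ord0 k *m Tm i1 = 0.
Proof.
move=> i10; split; first by rewrite /Tm !mulmxA u_idem.
move=> k k0.
set p := u ord0 ord0; set a := u ord0 i1; set b := u i1 ord0.
have pa : p *m a = a - a *m p.
  apply/eqP; rewrite eq_sym subr_eq; apply/eqP.
  by rewrite Ju eqxx mulr1n [i1 == ord0](negbTE i10) mulr0n addr0.
case: (eqVneq k i1) => [->|ki1].
  have apa : a *m p *m a = 0.
    have : a *m p = a - p *m a.
      apply/eqP; rewrite eq_sym subr_eq; apply/eqP.
      by rewrite Ju eqxx mulr1n [i1 == ord0](negbTE i10) mulr0n add0r.
    by move=> ->; rewrite mulmxBl -mulmxA u_sq0 1?eq_sym // mulmx0 subr0.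
  by rewrite /Tm !mulmxA -/a -/p apa !mul0mx.
set c := u ord0 k; set e := u k k.
have ec : e *m c + c *m e = c.
  by rewrite Ju (negbTE k0) mulr0n eqxx mulr1n add0r.
have [ep _] : e *m p = 0 /\ p *m e = 0.
  apply: L1; first exact: u_idem.
  by rewrite Ju (negbTE k0) [ord0 == k]eq_sym (negbTE k0) !mulr0n addr0.
have [ea _] : e *m a = 0 /\ a *m e = 0.
  apply: L1; first exact: u_idem.
  by rewrite Ju (negbTE k0) [i1 == k]eq_sym (negbTE ki1) !mulr0n addr0.
have ca : c *m a = - (a *m c).
  apply/eqP; rewrite -addr_eq0; apply/eqP.
  by rewrite Ju (negbTE k0) (negbTE i10) !mulr0n addr0.
have cp : c *m p = e *m c *m p.
  by rewrite -{1}ec mulmxDl -(mulmxA c e p) ep mulmx0 addr0.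
have eca : e *m c *m a = 0.
  by rewrite -mulmxA ca mulmxN mulmxA ea mul0mx oppr0.
have ecpa : e *m c *m p *m a = 0.
  by rewrite -(mulmxA (e *m c)) pa mulmxBr eca mulmxA eca mul0mx subrr.
by rewrite /Tm !mulmxA -/a -/p -/b cp ecpa !mul0mx.
Qed.

Lemma T_idem i1 : i1 != ord0 -> Tm i1 *m Tm i1 = Tm i1 /\ Tm i1 + Tm' i1 = u ord0 ord0.
Proof.
move=> i10.
set p := u ord0 ord0; set a := u ord0 i1; set b := u i1 ord0; set q := u i1 i1.
have [pq _] : p *m q = 0 /\ q *m p = 0.
  apply: L1; first exact: u_idem.
  by rewrite Ju [ord0 == i1]eq_sym (negbTE i10) !mulr0n addr0.
have abba : a *m b + b *m a = p + q.
  by rewrite Ju !eqxx !mulr1n.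
have sum : Tm i1 + Tm' i1 = p.
  have -> : Tm i1 + Tm' i1 = p *m (a *m b + b *m a) *m p.
    by rewrite mulmxDr mulmxDl !mulmxA.
  by rewrite abba mulmxDr pq addr0 !u_idem.
have bpb : b *m p *m b = 0.
  have : b *m p = b - p *m b.
    apply/eqP; rewrite eq_sym subr_eq; apply/eqP.
    by rewrite Ju eqxx mulr1n [ord0 == i1]eq_sym (negbTE i10) mulr0n addr0.
  by move=> ->; rewrite mulmxBl -mulmxA u_sq0 // mulmx0 subr0.
have TT' : Tm i1 *m Tm' i1 = 0.
  have -> : Tm i1 *m Tm' i1 = p *m a *m (b *m p *m b) *m a *m p.
    by rewrite /Tm /Tm' !mulmxA -(mulmxA _ p p) u_idem.
  by rewrite bpb mulmx0 !mul0mx.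
have Tp : Tm i1 *m p = Tm i1 by rewrite /Tm -mulmxA u_idem.
split => //.
by rewrite -{3}Tp -sum mulmxDr TT' addr0.
Qed.

End Jrel.

Lemma Ju_swap (u : 'I_m.+1 -> 'I_m.+1 -> 'M[F]_N) :
  (forall i j k l, u i j *m u k l + u k l *m u i j
   = u i l *+ (j == k) + u k j *+ (l == i)) ->
  (forall i j k l, u j i *m u l k + u l k *m u j i
   = u l i *+ (j == k) + u j k *+ (l == i)).
Proof. by move=> Ju i j k l; rewrite Ju addrC [k == j]eq_sym [i == l]eq_sym. Qed.


Lemma mulmxMnr p q r (A : 'M[F]_(p,q)) (B : 'M[F]_(q,r)) k :
  A *m (B *+ k) = (A *m B) *+ k.
Proof. by elim: k => [|k IH]; rewrite ?mulr0n ?mulmx0 // !mulrS mulmxDr IH. Qed.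

Lemma scal_twice0 (x : F) : x = - x -> x = 0.
Proof.
move=> h; have : x *+ 2 = 0 by rewrite mulr2n {1}h addNr.
by rewrite -mulr_natl => /eqP; rewrite mulf_eq0 (negbTE two_neq0) /= => /eqP.
Qed.

Lemma ord1_0 (i : 'I_1) : i = ord0.
Proof. by apply: val_inj; case: i => [[|k]]. Qed.

Section Symp.
Variable S : 'M[F]_N.
Hypothesis S_unit : S \in unitmx.
Hypothesis S_skew : S^T = - S.

Lemma exists_l0 (u : 'I_m.+1 -> 'I_m.+1 -> 'M[F]_N) (T T' : 'M[F]_N) :
  T != 0 -> T *m T = T -> S *m T' = T^T *m S ->
  (u ord0 ord0 *m T = T /\ forall k, k != ord0 -> u ord0 k *m T = 0) ->
  (u ord0 ord0 *m T' = T' /\ forall k, k != ord0 -> u k ord0 *m T' = 0) ->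
  exists l1 l1' : 'cV[F]_N,
    hom u l1 /\ hom (fun i j => u j i) l1' /\ l1^T *m S *m l1' = 1%:M.
Proof.
move=> T0 TT ST [pT hT] [pT' hT'].
have [r [s Trs]] : exists r s, T r s != 0.
  case: (pickP (fun rs : 'I_N * 'I_N => T rs.1 rs.2 != 0)) => [[r s] /= h|h].
    by exists r, s.
  case/negP: T0; apply/eqP/matrixP => r s; move: (h (r, s)) => /= /negbFE/eqP.
  by rewrite mxE.
pose x : 'cV[F]_N := delta_mx s ord0.
pose l1 := T *m x.
have l1r : l1 r ord0 != 0 by rewrite /l1 /x -colE mxE.
have l1E : l1 = T *m x by [].
clearbody l1.
pose w := l1^T *m S.
have wE : w = l1^T *m S by [].
clearbody w.
have [t wt] : exists t, w ord0 t != 0.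
  case: (pickP (fun t => w ord0 t != 0)) => [t h|h]; first by exists t.
  have w0 : w = 0.
    by apply/matrixP => i j; rewrite (ord1_0 i); move: (h j) => /negbFE/eqP ->; rewrite mxE.
  have : l1^T = 0 by rewrite -[l1^T]mulmx1 -(mulmxV S_unit) mulmxA -wE w0 mul0mx.
  by move/matrixP/(_ ord0 r); rewrite !mxE => e; move: l1r; rewrite e eqxx.
pose y : 'cV[F]_N := (w ord0 t)^-1 *: delta_mx t ord0.
exists l1, (T' *m y); split; last split.
- split; first by rewrite l1E mulmxA pT.
  by move=> k k0; rewrite l1E mulmxA hT // mul0mx.
- split; first by rewrite /= mulmxA pT'.
  by move=> k k0; rewrite /= mulmxA hT' // mul0mx.
have key : l1^T *m S *m T' = w.
  by rewrite -mulmxA ST wE l1E !trmx_mul !mulmxA -(mulmxA x^T T^T T^T) -(trmx_mul T T) TT.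
rewrite mulmxA key /y -scalemxAr -colE; apply/matrixP => i j; rewrite (ord1_0 i) (ord1_0 j) !mxE.
by rewrite mulVf.
Qed.

Definition Lof (f : 'I_m.+1 -> 'cV[F]_N) : 'M[F]_(N, m.+1) :=
  \matrix_(r, j) f j r ord0.

Lemma eq_Lof f g : (forall j, f j = g j) -> Lof f = Lof g.
Proof. by move=> h; apply/matrixP => r j; rewrite !mxE h. Qed.

Lemma mul_Lof (A : 'M[F]_N) f : A *m Lof f = Lof (fun j => A *m f j).
Proof. by apply/matrixP => r j; rewrite !mxE; apply: eq_bigr => s _; rewrite !mxE. Qed.

Lemma Lof_delta f a b : Lof f *m delta_mx a b = Lof (fun j => f a *+ (b == j)).
Proof.
apply/matrixP => r j; rewrite !mxE (bigD1 a) //= big1 ?addr0.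
  rewrite !mxE mulmxnE eqxx /= [b == j]eq_sym.
  by case: (j == b); rewrite ?mulr1 ?mulr0 ?mulr1n ?mulr0n.
by move=> s sa; rewrite !mxE (negbTE sa) /= mulr0.
Qed.

Lemma Gram_Lof f g : (Lof f)^T *m S *m Lof g
  = \matrix_(i, j) ((f i)^T *m S *m g j) ord0 ord0.
Proof.
apply/matrixP => i j; rewrite !mxE; apply: eq_bigr => s _; rewrite !mxE.
by congr (_ * _); apply: eq_bigr => t _; rewrite !mxE.
Qed.


Lemma mx0E p q (i : 'I_p) (j : 'I_q) : (0 : 'M[F]_(p,q)) i j = 0.
Proof. by rewrite mxE. Qed.
Lemma mx1E p (i j : 'I_p) : (1%:M : 'M[F]_p) i j = (i == j)%:R.
Proof. by rewrite mxE. Qed.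
Lemma oppmxE p q (A : 'M[F]_(p,q)) i j : (- A) i j = - A i j.
Proof. by rewrite mxE. Qed.
Lemma trmxE p q (A : 'M[F]_(p,q)) i j : A^T i j = A j i.
Proof. by rewrite mxE. Qed.
Lemma LofE f i j : Lof f i j = f j i ord0.
Proof. by rewrite mxE. Qed.

Lemma sa2 (X : 'M[F]_N) p (Z : 'M[F]_(N,p)) : X^T *m S = S *m X ->
  X^T *m (S *m Z) = S *m (X *m Z).
Proof. by move=> h; rewrite mulmxA h mulmxA. Qed.

Lemma sa4 (X1 X2 X3 X4 : 'M[F]_N) :
  X1^T *m S = S *m X1 -> X2^T *m S = S *m X2 -> X3^T *m S = S *m X3 ->
  X4^T *m S = S *m X4 ->
  (X1 *m X2 *m X3 *m X4)^T *m S = S *m (X4 *m X3 *m X2 *m X1).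
Proof.
move=> h1 h2 h3 h4.
by rewrite !trmx_mul -!mulmxA h1 (sa2 _ h2) (sa2 _ h3) (sa2 _ h4) !mulmxA.
Qed.

Section U.
Variable u : 'I_m.+1 -> 'I_m.+1 -> 'M[F]_N.
Hypothesis Ju : forall i j k l, u i j *m u k l + u k l *m u i j
   = u i l *+ (j == k) + u k j *+ (l == i).
Hypothesis Hsa : forall i j, (u i j)^T *m S = S *m u i j.

Lemma Lrel v : hom u v -> forall a b,
  u a b *m Lof (fun j => u j ord0 *m v) = Lof (fun j => u j ord0 *m v) *m delta_mx a b.
Proof. move=> hv a b; rewrite mul_Lof Lof_delta; apply: eq_Lof => j; exact: Hlemma. Qed.

Lemma adj (v : 'cV[F]_N) i (w : 'cV[F]_N) :
  (u i ord0 *m v)^T *m S *m w = v^T *m S *m (u i ord0 *m w).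
Proof. by rewrite trmx_mul -!mulmxA (mulmxA (u i ord0)^T) Hsa !mulmxA. Qed.

Lemma Gram0 v : hom u v ->
  (Lof (fun j => u j ord0 *m v))^T *m S *m Lof (fun j => u j ord0 *m v) = 0.
Proof.
move=> hv; have [pv _] := hv.
rewrite Gram_Lof; apply/matrixP => i j; rewrite mxE mx0E adj.
case: (eqVneq j ord0) => [->|j0]; last first.
  by rewrite (Hlemma Ju hv) [ord0 == j]eq_sym (negbTE j0) mulr0n mulmx0 mx0E.
rewrite pv; apply: scal_twice0.
have hA := adj v i v.
have hB : v^T *m S *m (u i ord0 *m v) = - ((u i ord0 *m v)^T *m S *m v)^T.
  rewrite (trmx_mul ((u i ord0 *m v)^T *m S) v) (trmx_mul (u i ord0 *m v)^T S).
  by rewrite trmxK S_skew mulNmx mulmxN opprK !mulmxA.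
by rewrite {2}hB oppmxE trmxE hA opprK.
Qed.

Lemma Gram1 l1 l1' : hom u l1 -> hom (fun i j => u j i) l1' ->
  l1^T *m S *m l1' = 1%:M ->
  (Lof (fun j => u j ord0 *m l1))^T *m S *m Lof (fun j => u ord0 j *m l1') = 1%:M.
Proof.
move=> h1 h1' e; have [pv' _] := h1'; simpl in pv'.
rewrite Gram_Lof; apply/matrixP => i j; rewrite mxE adj.
have := Hlemma (Ju_swap Ju) h1' ord0 i j; rewrite /= => ->.
by rewrite pv' mulmxMnr e mulmxnE !mx1E eqxx.
Qed.

End U.

Lemma exists_L (u : 'I_m.+1 -> 'I_m.+1 -> 'M[F]_N) :
  (forall i j k l, u i j *m u k l + u k l *m u i j
   = u i l *+ (j == k) + u k j *+ (l == i)) ->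
  (forall i j, (u i j)^T *m S = S *m u i j) ->
  u ord0 ord0 != 0 ->
  exists L L' : 'M[F]_(N, m.+1),
    (forall a b, u a b *m L = L *m delta_mx a b) /\
    (forall a b, u a b *m L' = L' *m delta_mx b a) /\
    L^T *m S *m L = 0 /\ L'^T *m S *m L' = 0 /\ L^T *m S *m L' = 1%:M.
Proof.
move=> Ju Hsa p0.
have Ju' := Ju_swap Ju.
have Hsa' : forall i j, (u j i)^T *m S = S *m u j i by move=> i j; exact: Hsa.
have [l1 [l1' [h1 [h1' e]]]] : exists l1 l1' : 'cV[F]_N,
    hom u l1 /\ hom (fun i j => u j i) l1' /\ l1^T *m S *m l1' = 1%:M.
  case: (pickP (fun i : 'I_m.+1 => i != ord0)) => [i1 i10 | none].
    have [TT Tsum] := T_idem Ju i10.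
    have ST : S *m Tm' u i1 = (Tm u i1)^T *m S.
      by rewrite /Tm /Tm' sa4.
    apply: (exists_l0 (T := Tm u i1) (T' := Tm' u i1)) => //.
    - apply/negP => /eqP T0; move/negP: p0; apply; apply/eqP.
      have T'0 : Tm' u i1 = 0.
        by rewrite -[Tm' u i1]mul1mx -(mulVmx S_unit) -mulmxA ST T0 trmx0 mul0mx mulmx0.
      by rewrite -Tsum T0 T'0 addr0.
    - exact: (T_hom Ju i10).
    - exact: (T_hom Ju' i10).
  apply: (exists_l0 (T := u ord0 ord0) (T' := u ord0 ord0)) => //.
  - exact: u_idem.
  - by split; [exact: u_idem | move=> k; rewrite none].
  - by split; [exact: u_idem | move=> k; rewrite none].
exists (Lof (fun j => u j ord0 *m l1)), (Lof (fun j => u ord0 j *m l1')).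
split; first exact: (Lrel Ju h1).
split; first by move=> a b; exact: (Lrel Ju' h1' b a).
split; first exact: (Gram0 Ju Hsa h1).
split; first exact: (Gram0 Ju' Hsa' h1').
exact: (Gram1 Ju Hsa h1 h1' e).
Qed.

End Symp.
End Generic.

Section Main.
Variable F : fieldType.
Hypothesis two_neq0 : (2%:R : F) != 0.

Definition S0 (n : nat) : 'M[F]_(n + n) := block_mx 0 1%:M (- 1%:M) 0.

Lemma S0_skew n : (S0 n)^T = - S0 n.
Proof.
by rewrite /S0 tr_block_mx opp_block_mx !trmx0 trmx1 raddfN /= trmx1 opprK oppr0.
Qed.

Lemma S0_sq n : S0 n *m S0 n = - 1%:M.
Proof.
rewrite /S0 mulmx_block !mulmx0 !mul0mx !mulmx1 !mul1mx !add0r !addr0.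
by rewrite [in RHS](scalar_mx_block n n) opp_block_mx oppr0.
Qed.

Lemma S0_unit n : S0 n \in unitmx.
Proof.
have h : S0 n *m (- S0 n) = 1%:M by rewrite mulmxN S0_sq opprK.
by case: (mulmx1_unit h).
Qed.

Lemma inHj_iff n (M : 'M[F]_(n + n)) : inHj M <-> M^T *m S0 n = S0 n *m M.
Proof.
split.
  move=> [A [B [C [hB [hC ->]]]]].
  rewrite /S0 tr_block_mx trmxK !mulmx_block !mulmx0 !mul0mx !mulmx1 !mul1mx.
  by rewrite !mulmxN !mulNmx !mul1mx !mulmx1 !add0r !addr0 hB hC opprK.
rewrite -[M]submxK; set A := ulsubmx M; set B := ursubmx M; set C := dlsubmx M;
  set D := drsubmx M.
rewrite /S0 tr_block_mx !mulmx_block !mulmx0 !mul0mx !mulmx1 !mul1mx.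
rewrite !mulmxN !mulNmx !mul1mx !mulmx1 !add0r !addr0.
case/eq_block_mx => h1 h2 h3 h4.
exists A, B, C; split; first by [].
split; first by rewrite -{2}h1 opprK.
by rewrite h2.
Qed.

Definition conj_mx n (P M : 'M[F]_n) := invmx P *m M *m P.

Lemma conj_pres n (S P M : 'M[F]_n) : P \in unitmx -> P^T *m S *m P = S ->
  M^T *m S = S *m M -> (conj_mx P M)^T *m S = S *m conj_mx P M.
Proof.
move=> Pu hP hM; set R := invmx P.
have Ra : R^T *m S = S *m P.
  by rewrite -{1}hP !mulmxA -trmx_mul mulmxV // trmx1 mul1mx.
have Pb : P^T *m S = S *m R.
  by rewrite -{2}hP -!mulmxA mulmxV // mulmx1.
rewrite /conj_mx -/R !trmx_mul -!mulmxA Ra (mulmxA M^T) hM !mulmxA Pb.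
done.
Qed.

Lemma conj_mul n (P A B : 'M[F]_n) : P \in unitmx ->
  conj_mx P A *m conj_mx P B = conj_mx P (A *m B).
Proof.
move=> Pu; rewrite /conj_mx !mulmxA -(mulmxA _ P (invmx P)) mulmxV // mulmx1.
by [].
Qed.

End Main.

Unset Implicit Arguments.

Theorem lemma2p4 (F : closedFieldType) (n : nat)
  (two_neq0 : (2%:R : F) != 0)
  (J : 'M[F]_(n + n) -> Prop)
  (hJ : jordan_subalgebra_Hj J)
  (hiso : jiso_to_Fn_plus J) :
  exists phi : 'M[F]_(n + n) -> 'M[F]_(n + n),
    jautomorphism_Hj phi /\
    (forall M, (exists N, J N /\ phi N = M) <->
               (exists X : 'M[F]_n, M = block_mx X 0 0 X^T)).
Proof.
have [HJ [J0 _]] := hJ.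
case: n J hJ hiso HJ J0 => [|m] J hJ hiso HJ J0.
  exists id; split.
    split; first by [].
    split; first by [].
    split; first by [].
    split; first by move=> N hN; exists N.
    by [].
  move=> M; split => _.
    by exists 0; rewrite [M]flatmx0 [block_mx _ _ _ _]flatmx0.
  by exists 0; split => //; rewrite [M]flatmx0.
have [psi [lin [inj [imJ jhom]]]] := hiso.
have psi0 : psi 0 = 0.
  have := lin 1 0 0; rewrite !scale1r addr0 => h.
  have := congr1 (fun x => x - psi 0) h; rewrite /= subrr addrK => e.
  by rewrite -e.
have psiD X Y : psi (X + Y) = psi X + psi Y.
  by have := lin 1 X Y; rewrite !scale1r.
have psiZ a X : psi (a *: X) = a *: psi X.
  by have := lin a X 0; rewrite !addr0 psi0 addr0.
have psiMn X k : psi (X *+ k) = psi X *+ k.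
  by elim: k => [|k IH]; rewrite ?mulr0n ?psi0 // !mulrS psiD IH.
have psisum (I : Type) (r : seq I) (P : pred I) (f : I -> 'M[F]_m.+1) :
    psi (\sum_(i <- r | P i) f i) = \sum_(i <- r | P i) psi (f i).
  exact: (big_morph psi psiD psi0).
pose u i j := psi (delta_mx i j).
have psiE X : psi X = \sum_i \sum_j X i j *: u i j.
  rewrite {1}(matrix_sum_delta X) psisum; apply: eq_bigr => i _.
  by rewrite psisum; apply: eq_bigr => j _; rewrite psiZ.
have Ju : forall i j k l, u i j *m u k l + u k l *m u i j
   = u i l *+ (j == k) + u k j *+ (l == i).
  move=> i j k l.
  have := jhom (delta_mx i j) (delta_mx k l).
  rewrite /jprod !mul_delta_mx_cond psiZ psiD !psiMn => h.
  have := congr1 (fun X => 2%:R *: X) h; rewrite !scalerA mulfV // !scale1r.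
  by move=> ->.
have Hsa : forall i j, (u i j)^T *m S0 F m.+1 = S0 F m.+1 *m u i j.
  by move=> i j; apply/inHj_iff; apply: HJ; apply/imJ; exists (delta_mx i j).
have p0 : u ord0 ord0 != 0.
  apply/negP => /eqP h.
  have : delta_mx ord0 ord0 = 0 :> 'M[F]_m.+1 by apply: inj; rewrite psi0.
  by move/matrixP/(_ ord0 ord0); rewrite !mxE eqxx /= => /eqP; rewrite oner_eq0.
have [L [L' [hL [hL' [g0 [g0' g1]]]]]] :=
  exists_L two_neq0 (S0_unit F m.+1) (S0_skew F m.+1) Ju Hsa p0.
set S := S0 F m.+1 in Hsa g0 g0' g1 *.
pose Q := row_mx L L'.
have g1' : L'^T *m S *m L = - 1%:M.
  apply: oppr_inj; rewrite opprK -(trmx1 F m.+1) -g1 !trmx_mul trmxK.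
  by rewrite (S0_skew F m.+1) mulNmx mulmxN mulmxA.
have QSQ : Q^T *m S *m Q = S.
  by rewrite /Q tr_row_mx mul_col_mx mul_col_row g0 g0' g1 g1'.
have Qu : Q \in unitmx.
  have e : invmx S *m (Q^T *m S *m Q) = 1%:M by rewrite QSQ mulVmx // S0_unit.
  by rewrite !mulmxA in e; case: (mulmx1_unit e).
have hLX X : psi X *m L = L *m X.
  rewrite {2}(matrix_sum_delta X) psiE mulmx_suml mulmx_sumr; apply: eq_bigr => i _.
  rewrite mulmx_suml mulmx_sumr; apply: eq_bigr => j _.
  by rewrite -scalemxAl hL scalemxAr.
have XT X : X^T = \sum_i \sum_j X i j *: delta_mx j i.
  rewrite {1}(matrix_sum_delta X) raddf_sum; apply: eq_bigr => i _.
  rewrite raddf_sum; apply: eq_bigr => j _.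
  change ((X i j *: delta_mx i j)^T = X i j *: delta_mx j i).
  by apply/matrixP => a b; rewrite !mxE andbC.
have hL'X X : psi X *m L' = L' *m X^T.
  rewrite XT psiE mulmx_suml mulmx_sumr; apply: eq_bigr => i _.
  rewrite mulmx_suml mulmx_sumr; apply: eq_bigr => j _.
  by rewrite -scalemxAl hL' scalemxAr.
have PsiQ X : psi X *m Q = Q *m block_mx X 0 0 X^T.
  by rewrite /Q mul_mx_row hLX hL'X mul_row_block !mulmx0 addr0 add0r.
have phiPsi X : conj_mx Q (psi X) = block_mx X 0 0 X^T.
  by rewrite /conj_mx -mulmxA PsiQ mulmxA mulVmx // mul1mx.
exists (conj_mx Q); split.
  split.
    by move=> M /inHj_iff hM; apply/inHj_iff; exact: conj_pres Qu QSQ hM.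
  split.
    move=> a M N _ _; rewrite /conj_mx mulmxDr mulmxDl -scalemxAr.
    by rewrite -scalemxAl.
  split.
    move=> M N _ _ e; have := congr1 (fun X => Q *m X *m invmx Q) e.
    rewrite /conj_mx !mulmxA mulmxV // mul1mx -!mulmxA mulmxV // mulmx1. by rewrite mul1mx mulmx1.
  split.
    move=> N hN; exists (Q *m N *m invmx Q); split.
      have QiS : (invmx Q)^T *m S *m invmx Q = S.
        rewrite -{1}QSQ !mulmxA -trmx_mul mulmxV // trmx1 mul1mx.
        by rewrite -mulmxA mulmxV // mulmx1.
      apply/inHj_iff.
      have hN' := (proj1 (inHj_iff N)) hN.
      have Qiu : invmx Q \in unitmx by rewrite unitmx_inv.
      by have := conj_pres Qiu QiS hN'; rewrite /conj_mx invmxK.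
    by rewrite /conj_mx !mulmxA mulVmx // mul1mx -mulmxA mulVmx // mulmx1.
  move=> M N _ _; rewrite /jprod !conj_mul //.
  by rewrite /conj_mx -scalemxAr -scalemxAl mulmxDr mulmxDl.
move=> M; split.
  move=> [N [hN <-]]; have [X <-] := (imJ N).1 hN; exists X; exact: phiPsi.
move=> [X ->]; exists (psi X); split; last exact: phiPsi.
by apply/imJ; exists X.
Qed.
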